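(* Let $d\ge1$ and $n\ge d+2$ be integers, and let $M$ be a $K_{d+2}$-matroid on $E(K_n)$. Then the rank of $M$ is at most $dn-\binom{d+1}{2}$.
   Context: A $K_{d+2}$-matroid on $E(K_n)$ is a matroid on the edge set of the complete graph $K_n$ in which the edge set of every copy of $K_{d+2}$ in $K_n$ is a circuit. *)

(* Defs.v *)
From mathcomp Require Import all_boot.
Set Implicit Arguments. Unset Strict Implicit. Unset Printing Implicit Defensive.

Definition edges_Kn (n : nat) : {set {set 'I_n}} :=
  [set e : {set 'I_n} | #|e| == 2].

Definition is_matroid (T : finType) (E : {set T}) (indep : {set T} -> bool) : Prop :=
  [/\ (forall A : {set T}, indep A -> A \subset E),
      indep set0,
      (forall A B : {set T}, indep B -> A \subset B -> indep A) &
      (forall A B : {set T}, indep A -> indep B -> #|A| < #|B| ->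
         exists2 x, x \in B :\: A & indep (x |: A))].

Definition is_circuit (T : finType) (E : {set T}) (indep : {set T} -> bool)
  (C : {set T}) : Prop :=
  [/\ C \subset E, ~~ indep C & (forall D : {set T}, D \proper C -> indep D)].

Definition clique_edges (n : nat) (S : {set 'I_n}) : {set {set 'I_n}} :=
  [set e in edges_Kn n | e \subset S].

Definition is_Kmatroid (d n : nat) (indep : {set {set 'I_n}} -> bool) : Prop :=
  is_matroid (edges_Kn n) indep /\
  (forall S : {set 'I_n}, #|S| = d.+2 -> is_circuit (edges_Kn n) indep (clique_edges S)).

Definition mrank (T : finType) (indep : {set T} -> bool) : nat :=
  \max_(A : {set T} | indep A) #|A|.

(* Main.v *)
Require Import Defs.
From mathcomp Require Import all_boot zify.
Set Implicit Arguments. Unset Strict Implicit. Unset Printing Implicit Defensive.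

Lemma span_bound (T : finType) (E F : {set T}) (indep : {set T} -> bool) :
  is_matroid E indep ->
  (forall x, x \in E -> x \notin F -> exists2 C : {set T},
      (x \in C) && (C \subset x |: F) & ~~ indep C /\ indep (C :\ x)) ->
  forall I, indep I -> #|I| <= #|F|.
Proof.
case=> sub0 ind0 hered aug Hc I indI.
rewrite leqNgt; apply/negP => ltFI.
pose PJ A := indep A && (A \subset F).
have PJ0 : PJ set0 by rewrite /PJ ind0 sub0set.
case: (arg_maxnP (fun A : {set T} => #|A|) PJ0) => J /andP[indJ JF] maxJ.
have ltJI : #|J| < #|I| by apply: leq_ltn_trans (subset_leq_card JF) ltFI.
have [x /setDP[xI xJ] indxJ] := aug _ _ indJ indI ltJI.
have cardxJ : #|x |: J| = #|J|.+1 by rewrite cardsU1 xJ.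
case xF: (x \in F).
  have H : PJ (x |: J) by rewrite /PJ indxJ subUset sub1set xF JF.
  by have := maxJ _ H; rewrite /= cardxJ ltnn.
have xE : x \in E by apply: (subsetP (sub0 I indI)).
have [C /andP[xC CxF] [nindC indCx]] := Hc x xE (negbT xF).
have CxsF : C :\ x \subset F.
  apply/subsetP => z /setD1P[zx zC].
  by move: (subsetP CxF z zC); rewrite in_setU1 (negbTE zx).
pose PL A := [&& indep A, C :\ x \subset A & A \subset (C :\ x) :|: J].
have PL0 : PL (C :\ x) by rewrite /PL indCx subxx subsetUl.
case: (arg_maxnP (fun A : {set T} => #|A|) PL0) => L /and3P[indL CL LCJ] maxL.
have LF : L \subset F.
  by apply: subset_trans LCJ _; rewrite subUset CxsF JF.
have leLJ : #|L| <= #|J| by apply: (maxJ L); rewrite /PJ indL LF.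
have ltL : #|L| < #|x |: J| by rewrite cardxJ ltnS.
have [y /setDP[yxJ yL] indyL] := aug _ _ indL indxJ ltL.
case: (eqVneq y x) => [eyx | nyx].
  subst y.
  have : indep C.
    apply: (hered _ (x |: L) indyL).
    apply/subsetP => z zC; rewrite in_setU1.
    case: (eqVneq z x) => //= zx.
    by apply: (subsetP CL); rewrite in_setD1 zx zC.
  by rewrite (negbTE nindC).
have yJ : y \in J by move: yxJ; rewrite in_setU1 (negbTE nyx).
have H : PL (y |: L).
  by rewrite /PL indyL (subset_trans CL (subsetUr _ _)) subUset sub1set LCJ in_setU yJ orbT.
by have := maxL _ H; rewrite /= cardsU1 yL add1n ltnn.
Qed.
Lemma binarith m d : 'C(m+d,2) + 'C(d.+1,2) = 'C(m,2) + d*(m+d).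
Proof.
elim: d => [|d IH]; first by rewrite addn0 (_ : 'C(1,2) = 0) //; lia.
rewrite addnS !binS !bin1 /=.
rewrite binS bin1 in IH. rewrite bin0. nia.
Qed.

Theorem lemma4p1 (d n : nat) (indep : {set {set 'I_n}} -> bool) :
  1 <= d -> d + 2 <= n -> @is_Kmatroid d n indep ->
  mrank indep <= d * n - 'C(d.+1, 2).
Proof.
move=> d1 dn [mat circ].
have len : d <= n by lia.
pose Dset := [set widen_ord len x | x : 'I_d].
have inD : forall i : 'I_n, (i \in Dset) = (i < d).
  move=> i; apply/imsetP/idP => [[x _ ->] | lt]; first exact: (ltn_ord x).
  by exists (Ordinal lt) => //; apply: val_inj.
have cardD : #|Dset| = d by rewrite card_imset ?card_ord //; by move=> a b [] /val_inj.
pose F := [set e in edges_Kn n | [exists i in e, i < d]].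
have FE : F \subset edges_Kn n by apply/subsetP => e; rewrite inE => /andP[].
have step1 : mrank indep <= #|F|.
  apply/bigmax_leqP => A indA.
  apply: (span_bound mat) indA => x xE xF.
  have x2 : #|x| == 2 by move: xE; rewrite inE.
  have nx : forall i, i \in x -> d <= i.
    move=> i ix; rewrite leqNgt; apply/negP => lt.
    move: xF; rewrite inE xE /=; case/negP; apply/existsP; exists i; by rewrite ix.
  have disj : Dset :&: x = set0.
    apply/setP => i; rewrite !inE inD.
    case ix: (i \in x); last by rewrite andbF.
    by rewrite andbT ltnNge nx.
  have cS : #|Dset :|: x| = d.+2.
    by rewrite cardsU disj cards0 subn0 cardD (eqP x2) addn2.
  have [CE nC indP] := circ _ cS.
  exists (clique_edges (Dset :|: x)); last split => //.
  - apply/andP; split; first by rewrite inE xE subsetUr.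
    apply/subsetP => f; rewrite inE => /andP[fE fS].
    rewrite in_setU1; case: (eqVneq f x) => //= fx.
    rewrite inE fE /=.
    apply/existsP.
    case: (boolP [exists i in f, i < d]) => [/existsP //| /existsPn nf].
    exfalso; move/eqP: fx; apply.
    have fx : f \subset x.
      apply/subsetP => i fi; move: (subsetP fS i fi); rewrite in_setU inD.
      by move: (nf i); rewrite fi /= => /negbTE ->.
    apply/eqP; rewrite eqEcard fx (eqP x2).
    by move: fE; rewrite inE => /eqP ->.
  - apply: indP; apply: properD1; by rewrite inE xE subsetUr.
apply: (leq_trans step1).
pose G := edges_Kn n :\: F.
have hFG : #|F| + #|G| = 'C(n, 2).
  by rewrite -(setIidPr FE) cardsID /edges_Kn card_draws card_ord.
have shf_lt : forall x : 'I_(n - d), x + d < n.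
  move=> x; have := ltn_ord x; lia.
pose shf (x : 'I_(n - d)) : 'I_n := Ordinal (shf_lt x).
have shf_inj : injective shf by move=> a b [] /eqP; rewrite eqn_add2r => /eqP /val_inj.
pose H := [set shf @: A | A : {set 'I_(n - d)} in [set B : {set 'I_(n - d)} | #|B| == 2]].
have cH : #|H| = 'C(n - d, 2).
  rewrite card_imset ?card_draws ?card_ord //.
  exact: imset_inj.
have HG : H \subset G.
  apply/subsetP => e /imsetP [A]; rewrite inE => A2 ->.
  have cA : #|shf @: A| == 2 by rewrite card_imset.
  rewrite !inE cA /= andbT negb_exists; apply/forallP => i.
  apply/negP => /andP[/imsetP [y _ ->]] /=; lia.
have := subset_leq_card HG; rewrite cH => hG.
have := binarith (n - d) d; rewrite subnK //.
move=> e. move: hG; rewrite -(leq_add2l #|F|) hFG. lia.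
Qed.
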